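(* Let $\mathbf{v}$ be a random variable giving weak ignorability, i.e. for both $t\in\{0,1\}$, $\mathbf{y}(t)\perp\mathrm{t}\mid\mathbf{v}$ and $p(\mathrm{t}\mid\mathbf{v})>0$. If $\mathbb{P}_{\mathrm{t}}(\mathbf{v})$ is a Pt-score, then $\mathbf{y}(t)\perp\mathbf{v},\mathrm{t}\mid\mathbb{P}_t$ for both $t\in\{0,1\}$.
   Context: Potential outcomes framework: binary treatment $\mathrm{t}\in\{0,1\}$ and potential outcomes $\mathbf{y}(0),\mathbf{y}(1)$. A P0-score (resp. P1-score) of $\mathbf{v}$ is a function $\mathbb{P}(\mathbf{v})$ such that $\mathbf{y}(0)\perp\mathbf{v}\mid\mathbb{P}(\mathbf{v})$ (resp. $\mathbf{y}(1)\perp\mathbf{v}\mid\mathbb{P}(\mathbf{v})$). Given a P0-score $\mathbb{P}_0$ and a P1-score $\mathbb{P}_1$, the Pt-score is $\mathbb{P}_{\mathrm{t}}$, i.e. $\mathbb{P}_t$ when $\mathrm{t}=t$. *)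

(* Defs.v *)
From HB Require Import structures.
From mathcomp Require Import all_boot all_order all_algebra.
From mathcomp Require Import all_classical all_reals all_analysis.

Set Implicit Arguments.
Unset Strict Implicit.
Unset Printing Implicit Defensive.

Import Order.TTheory GRing.Theory Num.Theory.
Local Open Scope classical_set_scope.
Local Open Scope ring_scope.

(* Conditional independence  x _||_ y | z  on a probability space (T, P):
   for every measurable event {x \in A}, the conditional probability
   P(x \in A | y, z) admits a version that is a measurable function of z
   alone, i.e. there is a measurable g : Z -> [0,1] with
     P(x \in A, y \in B, z \in C) = E[ g(z) ; y \in B, z \in C ]
   for all measurable B, C (rectangles generate sigma(y,z)). *)
Definition cond_indep {d dx dy dz : measure_display} {T : measurableType d}
  {R : realType} (P : probability T R)
  {X : measurableType dx} {Y : measurableType dy} {Z : measurableType dz}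
  (x : T -> X) (y : T -> Y) (z : T -> Z) : Prop :=
  forall A : set X, measurable A ->
    exists g : Z -> R,
      [/\ measurable_fun setT g,
          (forall c, 0 <= g c <= 1) &
          forall (B : set Y) (C : set Z), measurable B -> measurable C ->
            P (x @^-1` A `&` y @^-1` B `&` z @^-1` C) =
            (\int[P]_(w in y @^-1` B `&` z @^-1` C) (g (z w))%:E)%E].

(* Positivity  p(t = b | v) > 0  (almost surely): some version h(v) of the
   conditional probability P(t = b | v) is a.s. strictly positive. *)
Definition positivity {d dv : measure_display} {T : measurableType d}
  {R : realType} (P : probability T R) {V : measurableType dv}
  (tr : T -> bool) (v : T -> V) (b : bool) : Prop :=
  exists h : V -> R,
    [/\ measurable_fun setT h,
        (forall c, 0 <= h c <= 1),
        (forall C : set V, measurable C ->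
           P (tr @^-1` [set b] `&` v @^-1` C) =
           (\int[P]_(w in v @^-1` C) (h (v w))%:E)%E) &
        {ae P, forall w, 0 < h (v w)}].

(* f is a score of v for the outcome y: y _||_ v | f(v).  With y = y(0)
   (resp. y(1)) this is a P0-score (resp. P1-score). *)
Definition is_score {d dy dv ds : measure_display} {T : measurableType d}
  {R : realType} (P : probability T R)
  {Y : measurableType dy} {V : measurableType dv} {S : measurableType ds}
  (y : T -> Y) (v : T -> V) (f : V -> S) : Prop :=
  measurable_fun setT f /\ cond_indep P y v (f \o v).

(* Main.v *)
Require Import Defs.
From HB Require Import structures.
From mathcomp Require Import all_boot all_order all_algebra.
From mathcomp Require Import all_classical all_reals all_analysis.

Import Order.TTheory GRing.Theory Num.Theory.
Local Open Scope classical_set_scope.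
Local Open Scope ring_scope.

Lemma mpre {d1 d2 : measure_display} {T1 : measurableType d1} {T2 : measurableType d2}
  (h : T1 -> T2) (B : set T2) :
  measurable_fun setT h -> measurable B -> measurable (h @^-1` B).
Proof. by move=> mh mB; rewrite -[X in measurable X]setTI; exact: mh. Qed.

Definition packmf {d1 d2 : measure_display} {T1 : measurableType d1} {T2 : measurableType d2}
  (h : T1 -> T2) (mh : measurable_fun setT h) : {mfun T1 >-> T2} :=
  HB.pack h (isMeasurableFun.Build _ _ _ _ h mh).

Lemma bnd_integrable {d1 : measure_display} {T1 : measurableType d1} {R : realType}
  (mu : probability T1 R) (D : set T1) (h : T1 -> R) :
  measurable D -> measurable_fun setT h -> (forall c, 0 <= h c <= 1) ->
  mu.-integrable D (EFin \o h).
Proof.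
move=> mD mh hb.
apply: (@le_integrable _ _ _ mu D mD _ (EFin \o cst 1)).
  by apply/measurable_realfun.measurable_EFinP; exact: measurable_funTS.
  move=> x _ /=; rewrite lee_fin ger0_norm; last by case/andP: (hb x).
  by rewrite normr1; case/andP: (hb x).
exact: finite_measure_integrable_cst.
Qed.

Lemma pf_eq {d dv : measure_display} {T : measurableType d} {R : realType}
  (P : probability T R) {V : measurableType dv} (v : T -> V)
  (mv : measurable_fun setT v) (h : V -> R) (mh : measurable_fun setT h)
  (hb : forall c, 0 <= h c) (E : set V) (mE : measurable E) :
  (\int[distribution P (packmf v mv)]_(y in E) (EFin \o h) y =
   \int[P]_(w in v @^-1` E) (h (v w))%:E)%E.
Proof.
apply: (ge0_integral_pushforward mv P mE).
- by apply/measurable_realfun.measurable_EFinP; exact: measurable_funTS.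
- by move=> c _; rewrite lee_fin.
Qed.

Lemma sigma_eq {d dx dv ds : measure_display} {T : measurableType d} {R : realType}
  (P : probability T R) {X : measurableType dx} {V : measurableType dv}
  {S : measurableType ds} (x : T -> X) (v : T -> V) (f : V -> S)
  (mv : measurable_fun setT v) (mf : measurable_fun setT f)
  (g : V -> R) (g' : S -> R)
  (mg : measurable_fun setT g) (mg' : measurable_fun setT g')
  (gb : forall c, 0 <= g c <= 1) (gb' : forall c, 0 <= g' c <= 1) (A : set X)
  (H1 : forall E, measurable E ->
     P (x @^-1` A `&` v @^-1` E) = (\int[P]_(w in v @^-1` E) (g (v w))%:E)%E)
  (H2 : forall E, measurable E ->
     P (x @^-1` A `&` v @^-1` E) = (\int[P]_(w in v @^-1` E) (g' (f (v w)))%:E)%E) :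
  forall F, measurable F ->
    (\int[P]_(w in F) (g (v w))%:E = \int[P]_(w in F) (g' (f (v w)))%:E)%E.
Proof.
have mgf : measurable_fun setT (g' \o f) by exact: measurableT_comp.
pose mu := distribution P (packmf v mv).
have H : ae_eq mu setT (EFin \o g) (EFin \o (g' \o f)).
  apply: integral_ae_eq => //.
  - by apply: bnd_integrable => // c; exact: gb'.
  - by apply/measurable_realfun.measurable_EFinP.
  move=> E _ mE.
  have g0 : forall c, 0 <= g c by move=> c; case/andP: (gb c).
  have g0' : forall c, 0 <= (g' \o f) c by move=> c; case/andP: (gb' (f c)).
  rewrite /mu (pf_eq P v mv g mg g0 E mE) (pf_eq P v mv (g' \o f) mgf g0' E mE).
  by rewrite -H1 // -H2.
move=> F mF.
apply: ae_eq_integral => //.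
- apply/measurable_realfun.measurable_EFinP; apply: measurable_funTS.
  exact: (measurableT_comp mg mv).
- apply/measurable_realfun.measurable_EFinP; apply: measurable_funTS.
  exact: (measurableT_comp mgf mv).
have [N [mN N0 sN]] := H.
exists (v @^-1` N); split.
- exact: mpre.
- exact: N0.
move=> w /= nw; apply: sN => /= hn; apply: nw => _.
by have := hn I.
Qed.

Lemma contraction {d dx dv ds : measure_display} {T : measurableType d} {R : realType}
  (P : probability T R) {X : measurableType dx} {V : measurableType dv}
  {S : measurableType ds} (x : T -> X) (tr : T -> bool) (v : T -> V) (f : V -> S)
  (mx : measurable_fun setT x) (mtr : measurable_fun setT tr)
  (mv : measurable_fun setT v)
  (ign : cond_indep P x tr v) (sc : is_score P x v f) :
  cond_indep P x (fun w => (v w, tr w)) (f \o v).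
Proof.
case: sc => mf sc.
move=> A mA.
have [g [mg gb Hg]] := ign A mA.
have [g' [mg' gb' Hg']] := sc A mA.
exists g'; split => // B C mB mC.
have H1 : forall E, measurable E ->
     P (x @^-1` A `&` v @^-1` E) = (\int[P]_(w in v @^-1` E) (g (v w))%:E)%E.
  move=> E mE; have := Hg setT E measurableT mE.
  by rewrite preimage_setT setIT setTI.
have H2 : forall E, measurable E ->
     P (x @^-1` A `&` v @^-1` E) = (\int[P]_(w in v @^-1` E) (g' (f (v w)))%:E)%E.
  move=> E mE; have := Hg' E setT mE measurableT.
  by rewrite preimage_setT !setIT.
have heq := sigma_eq P x v f mv mf g g' mg mg' gb gb' A H1 H2.
pose Db b := ysection B b `&` f @^-1` C.
pose Fb b := tr @^-1` [set b] `&` v @^-1` Db b.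
have mDb b : measurable (Db b).
  by apply: measurableI; [exact: measurable_ysection | exact: mpre].
have mFb b : measurable (Fb b).
  by apply: measurableI; apply: mpre => //; exact: mDb.
have key : (fun w => (v w, tr w)) @^-1` B `&` (f \o v) @^-1` C = Fb false `|` Fb true.
  apply/seteqP; split => w /=.
    rewrite /Fb /Db /ysection /=.
    case E: (tr w) => -[Bw Cw]; [right|left]; split => //=.
    1,2: split => //; by rewrite inE.
  by case=> -[/= -> [Bw Cw]]; split => //; move: Bw; rewrite /ysection /= inE.
have disj : Fb false `&` Fb true = set0.
  by apply/seteqP; split => w //= [[/= E1 _] [/= E2 _]]; rewrite E1 in E2.
have mx1 : measurable (x @^-1` A) by exact: mpre.
have Fb_eq b : P (x @^-1` A `&` Fb b) =
     (\int[P]_(w in Fb b) (g' (f (v w)))%:E)%E.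
  rewrite /Fb setIA Hg //.
  by apply: heq; exact: mFb.
rewrite -setIA key setIUr measureU; last 3 first.
- exact: measurableI.
- exact: measurableI.
- by rewrite setIACA disj setI0.
rewrite ge0_integral_setU //.
- by congr (_ + _); apply: Fb_eq.
- apply/measurable_realfun.measurable_EFinP; apply: measurable_funTS.
  exact: (measurableT_comp (measurableT_comp mg' mf) mv).
- by move=> w _; rewrite lee_fin; case/andP: (gb' (f (v w))).
- by rewrite disj_set2E disj.
Qed.

Theorem proposition1
  (d dy dv ds0 ds1 : measure_display) (T : measurableType d) (R : realType)
  (P : probability T R)
  (Y : measurableType dy) (V : measurableType dv)
  (S0 : measurableType ds0) (S1 : measurableType ds1)
  (tr : T -> bool) (y0 y1 : T -> Y) (v : T -> V)
  (P0 : V -> S0) (P1 : V -> S1)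
  (mtr : measurable_fun setT tr) (my0 : measurable_fun setT y0)
  (my1 : measurable_fun setT y1) (mv : measurable_fun setT v)
  (ign0 : cond_indep P y0 tr v) (ign1 : cond_indep P y1 tr v)
  (pos0 : positivity P tr v false) (pos1 : positivity P tr v true)
  (sc0 : is_score P y0 v P0) (sc1 : is_score P y1 v P1) :
  cond_indep P y0 (fun w => (v w, tr w)) (P0 \o v) /\
  cond_indep P y1 (fun w => (v w, tr w)) (P1 \o v).
Proof.
split; exact: contraction.
Qed.
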